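(* Let $(X,\sigma)$ be a metric-like space and $f:X\to X$. Suppose there is a subset $Y$ with $f(X)\subseteq Y\subseteq X$ such that $(Y,\sigma)$ is complete, and there exist $k\in[0,1)$ and $\rho\in\Omega$ such that $$\int_0^{\sigma(fx,fy)}\rho(t)\,dt\le k\int_0^{\sigma(x,y)}\rho(t)\,dt\quad\text{for all }x,y\in X.$$ Then $f$ has a unique fixed point.
   Context: $\Omega$ is the set of all maps $\rho:[0,\infty)\to[0,\infty)$ that are Lebesgue-integrable on each compact subset of $[0,\infty)$ and satisfy $\int_0^\varepsilon\rho(t)\,dt>0$ for all $\varepsilon>0$. A metric-like space is a pair $(X,\sigma)$ with $X\neq\emptyset$ and $\sigma:X\times X\to[0,\infty)$ such that for all $x,y,z\in X$: $\sigma(x,y)=0\Rightarrow x=y$; $\sigma(x,y)=\sigma(y,x)$; $\sigma(x,y)\le\sigma(x,z)+\sigma(z,y)$. A sequence $\{x_n\}$ is Cauchy iff $\lim_{n,m\to\infty}\sigma(x_n,x_m)$ exists and is finite. $(Y,\sigma)$ is complete if every Cauchy sequence $\{x_n\}$ in $Y$ has some $x\in Y$ with $\lim_{n,m}\sigma(x_n,x_m)=\sigma(x,x)=\lim_n\sigma(x_n,x)$. *)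

(* Defs.v *)
(* Stdlib has no Lebesgue integral, so we
   define Lebesgue outer measure, Caratheodory measurability and the Lebesgue
   integral of a nonnegative function on [0,a] (via the layer-cake formula,
   as the supremum of lower sums of s |-> lambda({f > s})). *)
From Stdlib Require Import Reals Lra List.
Open Scope R_scope.

(* lambda*(A) <= r : A is covered by countably many open intervals (a n, b n)
   of total length <= r *)
Definition outer_le (A : R -> Prop) (r : R) : Prop :=
  exists a b : nat -> R,
    (forall n, a n <= b n) /\
    (forall x, A x -> exists n, a n < x < b n) /\
    (forall N, sum_f_R0 (fun n => b n - a n) N <= r).

Definition measure_is (A : R -> Prop) (m : R) : Prop :=
  (forall r, outer_le A r -> m <= r) /\
  (forall eps, 0 < eps -> outer_le A (m + eps)).

(* Caratheodory measurability:
   lambda*(T /\ E) + lambda*(T \ E) <= lambda*(T) for every test set T *)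
Definition lebesgue_measurable (E : R -> Prop) : Prop :=
  forall (T : R -> Prop) r, outer_le T r ->
  forall eps, 0 < eps ->
  exists r1 r2, outer_le (fun x => T x /\ E x) r1 /\
                outer_le (fun x => T x /\ ~ E x) r2 /\
                r1 + r2 <= r + eps.

Definition superlevel (f : R -> R) (a s : R) : R -> Prop :=
  fun x => 0 <= x <= a /\ s < f x.

Definition measurable_on (f : R -> R) (a : R) : Prop :=
  forall s, lebesgue_measurable (superlevel f a s).

(* lower_sum f a prev [s1;...;sm] v :
   prev < s1 < ... < sm and v = sum_i (s_i - s_{i-1}) lambda({f > s_i} /\ [0,a]) *)
Inductive lower_sum (f : R -> R) (a : R) : R -> list R -> R -> Prop :=
| ls_nil : forall prev, lower_sum f a prev nil 0
| ls_cons : forall prev s l m v,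
    prev < s ->
    measure_is (superlevel f a s) m ->
    lower_sum f a s l v ->
    lower_sum f a prev (s :: l) ((s - prev) * m + v).

Definition lebesgue_integral_is (f : R -> R) (a I : R) : Prop :=
  measurable_on f a /\
  (forall l v, lower_sum f a 0 l v -> v <= I) /\
  (forall eps, 0 < eps -> exists l v, lower_sum f a 0 l v /\ I - eps < v).

Definition Omega (rho : R -> R) : Prop :=
  (forall t, 0 <= t -> 0 <= rho t) /\
  (forall a, 0 <= a -> exists I, lebesgue_integral_is rho a I) /\
  (forall eps, 0 < eps -> forall I, lebesgue_integral_is rho eps I -> 0 < I).

Definition metric_like (X : Type) (sigma : X -> X -> R) : Prop :=
  inhabited X /\
  (forall x y, 0 <= sigma x y) /\
  (forall x y, sigma x y = 0 -> x = y) /\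
  (forall x y, sigma x y = sigma y x) /\
  (forall x y z, sigma x y <= sigma x z + sigma z y).

Definition double_limit {X : Type} (sigma : X -> X -> R) (x : nat -> X) (L : R) : Prop :=
  forall eps, 0 < eps -> exists N, forall n m, (n >= N)%nat -> (m >= N)%nat ->
    Rabs (sigma (x n) (x m) - L) < eps.

Definition ml_cauchy {X : Type} (sigma : X -> X -> R) (x : nat -> X) : Prop :=
  exists L, double_limit sigma x L.

Definition ml_complete {X : Type} (sigma : X -> X -> R) (Y : X -> Prop) : Prop :=
  forall x : nat -> X, (forall n, Y (x n)) -> ml_cauchy sigma x ->
  exists L p, double_limit sigma x L /\ Y p /\ sigma p p = L /\
              Un_cv (fun n => sigma (x n) p) L.

(* Main.v *)
Require Import Defs.
From Stdlib Require Import Reals Lra Lia Classical ClassicalEpsilon.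
Open Scope R_scope.

Lemma outer_le_sub (A B : R -> Prop) r :
  (forall x, A x -> B x) -> outer_le B r -> outer_le A r.
Proof.
  intros HAB [a [b [H1 [H2 H3]]]]. exists a, b. split; [exact H1|split].
  - intros x Ax. apply H2, HAB, Ax.
  - exact H3.
Qed.

Lemma outer_le_mono (A : R -> Prop) r r' : outer_le A r -> r <= r' -> outer_le A r'.
Proof.
  intros [a [b [H1 [H2 H3]]]] Hr. exists a, b. split; [exact H1|split; [exact H2|]].
  intros N. specialize (H3 N). lra.
Qed.

Lemma outer_le_nonneg (A : R -> Prop) r : outer_le A r -> 0 <= r.
Proof.
  intros [a [b [H1 [H2 H3]]]]. specialize (H3 0%nat). simpl in H3.
  specialize (H1 0%nat). lra.
Qed.

Lemma sum_aux (c : R) (N : nat) :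
  sum_f_R0 (fun n => (match n with O => c | _ => 0 end) - match n with O => 0 | _ => 0 end) N = c.
Proof.
  induction N as [|N IH]; simpl; [lra|]. rewrite IH. lra.
Qed.

Lemma outer_le_bounded (A : R -> Prop) (b : R) :
  0 <= b -> (forall x, A x -> 0 <= x <= b) -> outer_le A (b + 2).
Proof.
  intros Hb HA.
  exists (fun n => match n with O => -1 | _ => 0 end),
         (fun n => match n with O => b + 1 | _ => 0 end).
  split; [|split].
  - intros [|n]; lra.
  - intros x Ax. exists 0%nat. specialize (HA x Ax). lra.
  - intros N. induction N as [|N IH]; simpl in *; lra.
Qed.

Lemma measure_exists (A : R -> Prop) (b : R) :
  0 <= b -> (forall x, A x -> 0 <= x <= b) -> exists m, measure_is A m.
Proof.
  intros Hb HA.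
  set (E := fun y => exists r, outer_le A r /\ y = - r).
  assert (Hbd : bound E).
  { exists 0. intros y [r [Hr ->]]. apply outer_le_nonneg in Hr. lra. }
  assert (Hne : exists y, E y).
  { exists (-(b+2)). exists (b+2). split; [apply outer_le_bounded; auto|reflexivity]. }
  destruct (completeness E Hbd Hne) as [l [Hub Hlub]].
  exists (- l). split.
  - intros r Hr. assert (E (- r)) by (exists r; auto). specialize (Hub _ H). lra.
  - intros eps Heps.
    destruct (classic (exists r, outer_le A r /\ r < - l + eps)) as [[r [Hr Hlt]]|Hn].
    + apply (outer_le_mono _ r); [exact Hr|lra].
    + exfalso. assert (is_upper_bound E (l - eps)).
      { intros y [r [Hr ->]]. destruct (Rle_dec (-r) (l - eps)) as [|Hgt]; [auto|].
        exfalso. apply Hn. exists r. split; [exact Hr|lra]. }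
      specialize (Hlub _ H). lra.
Qed.

Lemma measure_le (A B : R -> Prop) m m' :
  (forall x, A x -> B x) -> measure_is A m -> measure_is B m' -> m <= m'.
Proof.
  intros HAB [HA1 HA2] [HB1 HB2].
  destruct (Rle_dec m m') as [|Hgt]; [auto|].
  exfalso. assert (Heps : 0 < (m - m') / 2) by lra.
  specialize (HB2 _ Heps). apply (outer_le_sub A) in HB2; [|exact HAB].
  specialize (HA1 _ HB2). lra.
Qed.

Lemma lower_sum_transfer (rho : R -> R) (a b : R) :
  0 <= a <= b ->
  forall prev l v, lower_sum rho a prev l v ->
  exists v', lower_sum rho b prev l v' /\ v <= v'.
Proof.
  intros Hab prev l v H. induction H as [prev|prev s l m v Hlt Hm Hl IH].
  - exists 0. split; [constructor|lra].
  - destruct IH as [v' [Hl' Hv']].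
    destruct (measure_exists (superlevel rho b s) b) as [m' Hm']; [lra| |].
    { intros x [Hx _]. exact Hx. }
    exists ((s - prev) * m' + v'). split; [constructor; auto|].
    assert (m <= m').
    { apply (measure_le (superlevel rho a s) (superlevel rho b s)); auto.
      intros x [Hx Hs]. split; [lra|exact Hs]. }
    apply Rplus_le_compat; [apply Rmult_le_compat_l; lra|exact Hv'].
Qed.

Lemma integral_mono (rho : R -> R) a b Ia Ib :
  0 <= a <= b -> lebesgue_integral_is rho a Ia -> lebesgue_integral_is rho b Ib -> Ia <= Ib.
Proof.
  intros Hab [_ [_ Ha3]] [_ [Hb2 _]].
  destruct (Rle_dec Ia Ib) as [|Hgt]; [auto|]. exfalso.
  destruct (Ha3 (Ia - Ib)) as [l [v [Hl Hv]]]; [lra|].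
  destruct (lower_sum_transfer rho a b Hab 0 l v Hl) as [v' [Hl' Hv']].
  specialize (Hb2 _ _ Hl'). lra.
Qed.

Lemma integral_nonneg (rho : R -> R) a I : lebesgue_integral_is rho a I -> 0 <= I.
Proof. intros [_ [H2 _]]. apply (H2 nil). constructor. Qed.

Definition Fint (rho : R -> R) (a : R) : R :=
  epsilon (inhabits 0) (fun I => lebesgue_integral_is rho a I).

Lemma Fint_spec rho a : Omega rho -> 0 <= a -> lebesgue_integral_is rho a (Fint rho a).
Proof.
  intros [_ [H2 _]] Ha. unfold Fint. apply epsilon_spec. apply H2, Ha.
Qed.

Fixpoint it {X} (f : X -> X) (n : nat) (z : X) : X :=
  match n with O => z | S n => f (it f n z) end.

Lemma it_comm {X} (f : X -> X) n z : it f n (f z) = f (it f n z).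
Proof. induction n; simpl; [reflexivity|now rewrite IHn]. Qed.

Lemma abstract_fp (X : Type) (sigma : X -> X -> R) (f : X -> X)
  (Y : X -> Prop) (k : R) (F : R -> R) :
  metric_like X sigma -> (forall x, Y (f x)) -> ml_complete sigma Y -> 0 <= k < 1 ->
  (forall a b, 0 <= a -> a <= b -> F a <= F b) ->
  (forall a, 0 < a -> 0 < F a) ->
  (forall a, 0 <= a -> 0 <= F a) ->
  (forall x y, F (sigma (f x) (f y)) <= k * F (sigma x y)) ->
  exists! x, f x = x.
Proof.
  intros [[z0] [Hs0 [Hs1 [Hsym Htri]]]] HY Hcomp Hk HM HP HN HC.
  assert (L0 : forall x y eps, 0 < eps -> sigma x y <= eps -> sigma (f x) (f y) < eps).
  { intros x y eps He Hxy.
    destruct (Rlt_dec (sigma (f x) (f y)) eps) as [|Hge]; [auto|]. exfalso.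
    apply Rnot_lt_le in Hge.
    pose proof (HM _ _ (Rlt_le _ _ He) Hge).
    pose proof (HC x y).
    pose proof (HM _ _ (Hs0 x y) Hxy).
    pose proof (HP _ He).
    assert (k * F (sigma x y) <= k * F eps) by (apply Rmult_le_compat_l; lra).
    nra. }
  assert (Hit : forall n u v, F (sigma (it f n u) (it f n v)) <= k ^ n * F (sigma u v)).
  { induction n as [|n IH]; intros u v; simpl; [lra|].
    specialize (HC (it f n u) (it f n v)). specialize (IH u v).
    assert (k * F (sigma (it f n u) (it f n v)) <= k * (k ^ n * F (sigma u v)))
      by (apply Rmult_le_compat_l; lra). lra. }
  assert (Hlim : forall u v eps, 0 < eps -> exists N, forall n, (n >= N)%nat ->
             sigma (it f n u) (it f n v) < eps).
  { intros u v eps He.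
    pose proof (HP _ He) as HFe. pose proof (HN _ (Hs0 u v)) as HFuv.
    assert (Hy : 0 < F eps / (F (sigma u v) + 1)).
    { apply Rdiv_lt_0_compat; lra. }
    destruct (pow_lt_1_zero k ltac:(rewrite Rabs_right; lra) _ Hy) as [N HN'].
    exists N. intros n Hn. specialize (HN' n Hn).
    rewrite Rabs_right in HN' by (apply Rle_ge, pow_le; lra).
    destruct (Rlt_dec (sigma (it f n u) (it f n v)) eps) as [|Hge]; [auto|]. exfalso.
    apply Rnot_lt_le in Hge.
    pose proof (HM _ _ (Rlt_le _ _ He) Hge). pose proof (Hit n u v).
    assert (k ^ n * F (sigma u v) < F eps).
    { apply Rle_lt_trans with (F eps / (F (sigma u v) + 1) * F (sigma u v)).
      - apply Rmult_le_compat_r; lra.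
      - unfold Rdiv. rewrite Rmult_assoc.
        assert (F (sigma u v) * / (F (sigma u v) + 1) < 1).
        { apply (Rmult_lt_reg_r (F (sigma u v) + 1)); [lra|].
          rewrite Rmult_assoc, Rinv_l by lra. lra. }
        rewrite Rmult_comm with (r1 := / (F (sigma u v) + 1)).
        nra. }
    lra. }
  assert (Hgap : forall eps, 0 < eps -> exists rh r, 0 < rh /\ rh < r /\ r <= eps /\ k * F r < F rh).
  { intros eps He. apply NNPP. intro Hno.
    assert (H1 : forall rh r, 0 < rh -> rh < r -> r <= eps -> F rh <= k * F r).
    { intros rh r H1 H2 H3. apply Rnot_lt_le. intro Hlt. apply Hno.
      exists rh, r. auto. }
    assert (H2 : forall n rh r, 0 < rh -> rh < r -> r <= eps -> F rh <= k ^ n * F r).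
    { induction n as [|n IH]; intros rh r Ha Hb Hc; simpl.
      - rewrite Rmult_1_l. apply HM; lra.
      - pose proof (H1 rh ((rh + r)/2) Ha ltac:(lra) ltac:(lra)).
        pose proof (IH ((rh + r)/2) r ltac:(lra) ltac:(lra) Hc).
        assert (k * F ((rh + r) / 2) <= k * (k ^ n * F r)) by (apply Rmult_le_compat_l; lra).
        lra. }
    pose proof (HP (eps/2) ltac:(lra)) as Hp2. pose proof (HP eps He) as Hpe.
    assert (Hy : 0 < F (eps/2) / F eps) by (apply Rdiv_lt_0_compat; lra).
    destruct (pow_lt_1_zero k ltac:(rewrite Rabs_right; lra) _ Hy) as [N HN'].
    specialize (HN' N (le_n N)).
    rewrite Rabs_right in HN' by (apply Rle_ge, pow_le; lra).
    specialize (H2 N (eps/2) eps ltac:(lra) ltac:(lra) ltac:(lra)).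
    assert (k ^ N * F eps < F (eps / 2)).
    { apply (Rmult_lt_compat_r (F eps)) in HN'; [|lra].
      unfold Rdiv in HN'. rewrite Rmult_assoc, Rinv_l in HN' by lra. lra. }
    lra. }
  set (x := fun n => it f n (f z0)).
  assert (HxS : forall n, x (S n) = f (x n)) by reflexivity.
  assert (HxY : forall n, Y (x n)).
  { intros [|n]; [apply HY|apply HY]. }
  assert (Hd : forall eps, 0 < eps -> exists N, forall n, (n >= N)%nat -> sigma (x n) (x (S n)) < eps).
  { intros eps He. destruct (Hlim (f z0) (f (f z0)) eps He) as [N HN'].
    exists N. intros n Hn. specialize (HN' n Hn). unfold x. simpl. rewrite <- it_comm. exact HN'. }
  assert (Hcau : double_limit sigma x 0).
  { intros eps He.
    destruct (Hgap (eps/4) ltac:(lra)) as [rh [r [Ha [Hb [Hc Hd']]]]].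
    destruct (Hd (r - rh) ltac:(lra)) as [N HN'].
    assert (Hj : forall j, sigma (x N) (x (N + S j)%nat) < r).
    { induction j as [|j IH].
      - rewrite Nat.add_1_r. specialize (HN' N (le_n N)). lra.
      - replace (N + S (S j))%nat with (S (N + S j)) by lia.
        rewrite HxS.
        assert (sigma (f (x N)) (f (x (N + S j)%nat)) < rh).
        { destruct (Rlt_dec (sigma (f (x N)) (f (x (N + S j)%nat))) rh) as [|Hge]; [auto|].
          exfalso. apply Rnot_lt_le in Hge.
          pose proof (HM _ _ (Rlt_le _ _ Ha) Hge). pose proof (HC (x N) (x (N + S j)%nat)).
          pose proof (HM _ _ (Hs0 _ _) (Rlt_le _ _ IH)).
          assert (k * F (sigma (x N) (x (N + S j)%nat)) <= k * F r) by (apply Rmult_le_compat_l; lra).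
          lra. }
        pose proof (Htri (x N) (f (x (N + S j)%nat)) (x (S N))).
        rewrite HxS in H0. specialize (HN' N (le_n N)). rewrite HxS in HN'. lra. }
    assert (Hm : forall m, (m >= N)%nat -> sigma (x N) (x m) < 2 * r).
    { intros m Hm. destruct (Nat.eq_dec m N) as [->|Hne].
      - pose proof (Htri (x N) (x N) (x (S N))). rewrite (Hsym (x (S N)) (x N)) in H.
        specialize (HN' N (le_n N)). lra.
      - replace m with (N + S (m - N - 1))%nat by lia. specialize (Hj (m - N - 1)%nat). lra. }
    exists N. intros n m Hn Hmm.
    pose proof (Htri (x n) (x m) (x N)). rewrite (Hsym (x n) (x N)) in H.
    pose proof (Hm n Hn). pose proof (Hm m Hmm). pose proof (Hs0 (x n) (x m)).
    rewrite Rminus_0_r, Rabs_right by lra. lra. }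
  destruct (Hcomp x HxY (ex_intro _ 0 Hcau)) as [L [p [HL [HpY [Hpp Hcv]]]]].
  assert (HL0 : L = 0).
  { destruct (Req_dec L 0) as [|Hne]; [auto|]. exfalso.
    assert (He : 0 < Rabs L / 2) by (pose proof (Rabs_pos_lt L Hne); lra).
    destruct (HL _ He) as [N1 H1]. destruct (Hcau _ He) as [N2 H2].
    specialize (H1 (N1 + N2)%nat (N1 + N2)%nat ltac:(lia) ltac:(lia)).
    specialize (H2 (N1 + N2)%nat (N1 + N2)%nat ltac:(lia) ltac:(lia)).
    apply Rabs_def2 in H1. apply Rabs_def2 in H2.
    destruct (Rcase_abs L) as [Hl|Hl]; [rewrite Rabs_left in * by lra|rewrite Rabs_right in * by lra]; lra. }
  rewrite HL0 in Hcv, Hpp.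
  assert (Hfp : f p = p).
  { apply Hs1. destruct (Rle_lt_or_eq_dec 0 (sigma (f p) p) (Hs0 _ _)) as [Hpos|]; [|auto].
    exfalso. destruct (Hcv (sigma (f p) p / 2) ltac:(lra)) as [N HN'].
    pose proof (HN' N (le_n N)) as H1. pose proof (HN' (S N) ltac:(lia)) as H2.
    unfold R_dist in H1, H2.
    rewrite Rminus_0_r, Rabs_right in H1 by apply Rle_ge, Hs0.
    rewrite Rminus_0_r, Rabs_right in H2 by apply Rle_ge, Hs0.
    pose proof (L0 p (x N) (sigma (f p) p / 2) ltac:(lra) ltac:(rewrite Hsym; lra)).
    rewrite <- HxS in H.
    pose proof (Htri (f p) p (x (S N))). lra. }
  exists p. split; [exact Hfp|].
  intros q Hfq. apply Hs1.
  destruct (Rle_lt_or_eq_dec 0 (sigma p q) (Hs0 _ _)) as [Hpos|]; [|auto].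
  exfalso. pose proof (L0 p q (sigma p q) Hpos (Rle_refl _)). rewrite Hfp, Hfq in H. lra.
Qed.

Theorem corollary5 (X : Type) (sigma : X -> X -> R) (f : X -> X)
  (Y : X -> Prop) (k : R) (rho : R -> R) :
  metric_like X sigma ->
  (forall x, Y (f x)) ->
  ml_complete sigma Y ->
  0 <= k < 1 ->
  Omega rho ->
  (forall x y I1 I2,
     lebesgue_integral_is rho (sigma (f x) (f y)) I1 ->
     lebesgue_integral_is rho (sigma x y) I2 ->
     I1 <= k * I2) ->
  exists! x, f x = x.
Proof.
  intros Hml HY Hc Hk Hom Hcon.
  pose proof Hml as [_ [Hs0 _]].
  apply (abstract_fp X sigma f Y k (Fint rho) Hml HY Hc Hk).
  - intros a b Ha Hab. apply (integral_mono rho a b). lra. apply Fint_spec; auto. apply Fint_spec; auto; lra.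
  - intros a Ha. pose proof Hom as [_ [_ H3]]. apply (H3 a Ha). apply Fint_spec; auto; lra.
  - intros a Ha. apply (integral_nonneg rho a). apply Fint_spec; auto.
  - intros x y. apply (Hcon x y); apply Fint_spec; auto.
Qed.
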